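(* Let $p>1$, $N\ge1$ and $M\in\mathbb R$. If $u$ is a ground state of (E) with $u(0)=1$, then there exists a constant $c_{N,p,M}>0$ such that for all $r>0$, $u(r)\le\min\{1,c_{N,p,M}r^{-\frac{2}{p-1}}\}$ and $|u_r(r)|\le c_{N,p,M}r^{-\frac{p+1}{p-1}}$.
   Context: (E) denotes the ODE $-u_{rr}-\frac{N-1}{r}u_r=|u|^{p-1}u+M|u_r|^{\frac{2p}{p+1}}$ for $r>0$. A ground state is a nonnegative $u\in C^2([0,\infty))$ with $u_r(0)=0$ solving (E) on $(0,\infty)$. *)

(* Defs.v *)
From Stdlib Require Import Reals.
From Coquelicot Require Import Coquelicot.
Open Scope R_scope.

(* |x|^a for a real exponent a > 0, with the convention 0^a = 0
   (Stdlib's Rpower 0 a = 1, so we treat x = 0 separately). *)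
Definition rpow_abs (x a : R) : R :=
  if Req_EM_T x 0 then 0 else Rpower (Rabs x) a.

Definition C2_half_line (u u1 u2 : R -> R) : Prop :=
  (forall r, 0 < r -> is_derive u r (u1 r)) /\
  (forall r, 0 < r -> is_derive u1 r (u2 r)) /\
  filterlim (fun h => (u h - u 0) / h) (at_right 0) (locally (u1 0)) /\
  filterlim (fun h => (u1 h - u1 0) / h) (at_right 0) (locally (u2 0)) /\
  (forall r, 0 <= r ->
     filterlim u2 (within (fun x => 0 <= x) (locally r)) (locally (u2 r))).

Definition solves_E (N : nat) (p M : R) (u u1 u2 : R -> R) : Prop :=
  forall r, 0 < r ->
    - u2 r - (INR N - 1) / r * u1 r
    = rpow_abs (u r) (p - 1) * u r + M * rpow_abs (u1 r) (2 * p / (p + 1)).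

Definition ground_state (N : nat) (p M : R) (u : R -> R) : Prop :=
  exists u1 u2 : R -> R,
    C2_half_line u u1 u2 /\
    (forall r, 0 <= r -> 0 <= u r) /\
    u1 0 = 0 /\
    solves_E N p M u u1 u2.

(* Main.v *)
Require Import Defs.
From Stdlib Require Import Reals Lra Lia Classical.
From Coquelicot Require Import Coquelicot.
Open Scope R_scope.

Definition rc (f : R -> R) (a : R) : Prop := continuity_pt (fun x => f (Rmax a x)) a.

Lemma rc_elim f a : rc f a -> forall eps, 0 < eps -> exists del, 0 < del /\
  forall x, a < x < a + del -> Rabs (f x - f a) < eps.
Proof.
  intros H eps Heps. destruct (H eps Heps) as [del [Hd Hx]].
  exists del; split; auto. intros x Hx'.
  specialize (Hx x). simpl in Hx. unfold R_dist, D_x, no_cond in Hx.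
  rewrite (Rmax_right a x) in Hx by lra. rewrite Rmax_left in Hx by lra.
  apply Hx. split. split; auto; lra. rewrite Rabs_right; lra.
Qed.

Lemma Rmax_lip a x y : Rabs (Rmax a x - Rmax a y) <= Rabs (x - y).
Proof. unfold Rmax; destruct (Rle_dec a x); destruct (Rle_dec a y);
  unfold Rabs; repeat destruct Rcase_abs; lra. Qed.

Lemma cont_Rmax a x0 : continuity_pt (fun x => Rmax a x) x0.
Proof.
  intros eps Heps. exists eps. split; auto. intros x [_ Hx]. simpl in *.
  unfold R_dist in *. eapply Rle_lt_trans. apply Rmax_lip. exact Hx.
Qed.

Lemma rc_of_cont f a : continuity_pt f a -> rc f a.
Proof.
  intros H. unfold rc.
  assert (E : (fun x => f (Rmax a x)) = comp f (fun x => Rmax a x)) by reflexivity.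
  rewrite E. apply continuity_pt_comp. apply cont_Rmax.
  rewrite Rmax_left by lra. exact H.
Qed.

Lemma cont_of_derive f x l : is_derive f x l -> continuity_pt f x.
Proof.
  intros H. apply derivable_continuous_pt. apply is_derive_Reals in H. exists l; exact H.
Qed.

Lemma mono f df a b : a < b -> rc f a ->
  (forall x, a < x <= b -> is_derive f x (df x)) ->
  (forall x, a < x <= b -> 0 <= df x) -> f a <= f b.
Proof.
  intros Hab Hrc Hd Hpos.
  assert (K : forall a', a < a' < b -> f a' <= f b).
  { intros a' Ha'.
    destruct (MVT_gen f a' b df) as [c [Hc Heq]].
    - intros x Hx. rewrite Rmin_left in Hx by lra. rewrite Rmax_right in Hx by lra.
      apply Hd; lra.
    - intros x Hx. rewrite Rmin_left in Hx by lra. rewrite Rmax_right in Hx by lra.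
      apply (cont_of_derive f x (df x)). apply Hd; lra.
    - rewrite Rmin_left in Hc by lra. rewrite Rmax_right in Hc by lra.
      assert (0 <= df c) by (apply Hpos; lra).
      assert (0 <= df c * (b - a')) by (apply Rmult_le_pos; lra). lra. }
  destruct (Rle_or_lt (f a) (f b)) as [H|H]; auto.
  destruct (rc_elim f a Hrc (f a - f b)) as [del [Hdel Hx]]; [lra|].
  set (a' := a + Rmin del (b - a) / 2).
  assert (Hm1 : Rmin del (b - a) <= del) by apply Rmin_l.
  assert (Hm2 : Rmin del (b - a) <= b - a) by apply Rmin_r.
  assert (Hm3 : 0 < Rmin del (b - a)) by (apply Rmin_pos; lra).
  specialize (Hx a'). specialize (K a').
  assert (Ha1 : a < a' < a + del) by (unfold a'; lra).
  assert (Ha2 : a < a' < b) by (unfold a'; lra).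
  specialize (Hx Ha1). specialize (K Ha2).
  apply Rabs_def2 in Hx. lra.
Qed.

Lemma last_point f a s : a <= s -> (forall t, a < t <= s -> continuity_pt f t) ->
  exists t0, a <= t0 <= s /\ (t0 = a \/ 0 <= f t0) /\ forall t, t0 < t <= s -> f t < 0.
Proof.
  intros Has Hc.
  set (E := fun x => a <= x <= s /\ (x = a \/ 0 <= f x)).
  assert (Hb : bound E) by (exists s; intros x [Hx _]; lra).
  assert (Hn : exists x, E x) by (exists a; split; [lra| left; auto]).
  destruct (completeness E Hb Hn) as [m [Hub Hlub]].
  assert (Ham : a <= m) by (apply Hub; split; [lra| left; auto]).
  assert (Hms : m <= s) by (apply Hlub; intros x [Hx _]; lra).
  exists m. split; [lra|]. split.
  - destruct (Req_dec m a) as [e|ne]; [left; auto| right].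
    destruct (Rle_or_lt 0 (f m)) as [h|h]; auto. exfalso.
    destruct (Hc m ltac:(lra) (- f m) ltac:(lra)) as [del [Hdel Hx]].
    set (m' := Rmax a (m - del / 2)).
    assert (m' < m) by (unfold m'; apply Rmax_lub_lt; lra).
    assert (m <= m').
    { apply Hlub. intros x [[Hx1 Hx2] Hx3].
      destruct (Rle_or_lt x m') as [h'|h']; auto.
      assert (x <= m) by (apply Hub; split; auto).
      assert (a < x) by (assert (a <= m') by apply Rmax_l; lra).
      destruct Hx3 as [e|Hx3]; [lra|].
      assert (m - del/2 <= m') by apply Rmax_r.
      destruct (Req_dec x m) as [ex|nx]; [subst; lra|].
      specialize (Hx x). simpl in Hx. unfold R_dist, D_x, no_cond in Hx.
      assert (HH : Rabs (f x - f m) < - f m).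
      { apply Hx. split. split; auto. rewrite Rabs_left1; lra. }
      apply Rabs_def2 in HH. lra. }
    lra.
  - intros t Ht. destruct (Rle_or_lt 0 (f t)) as [h|h]; auto.
    assert (t <= m) by (apply Hub; split; [lra| right; auto]). lra.
Qed.

Lemma ballR x e y : ball x e y <-> Rabs (y - x) < e.
Proof. reflexivity. Qed.

Lemma quot_bound f d : filterlim (fun h => (f h - f 0) / h) (at_right 0) (locally d) ->
  exists del, 0 < del /\ forall y, 0 < y < del -> Rabs (f y - f 0) <= y * (Rabs d + 1).
Proof.
  intros H. apply filterlim_locally with (eps := mkposreal 1 Rlt_0_1) in H.
  destruct H as [del Hdel]. exists del. split; [apply cond_pos|].
  intros y Hy. specialize (Hdel y).
  assert (Hb : Rabs ((f y - f 0) / y - d) < 1).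
  { apply Hdel; [change (Rabs (y - 0) < del); rewrite Rminus_0_r, Rabs_right; lra | lra]. }
  assert (E : f y - f 0 = y * ((f y - f 0)/y)) by (field; lra).
  rewrite E, Rabs_mult, (Rabs_right y) by lra.
  apply Rmult_le_compat_l; [lra|].
  assert (Rabs ((f y - f 0)/y) <= Rabs ((f y - f 0) / y - d) + Rabs d).
  { replace ((f y - f 0)/y) with (((f y - f 0) / y - d) + d) at 1 by ring. apply Rabs_triang. }
  lra.
Qed.

Lemma rc_from_quot f d : filterlim (fun h => (f h - f 0) / h) (at_right 0) (locally d) -> rc f 0.
Proof.
  intros H. destruct (quot_bound f d H) as [del [Hdel Hb]].
  intros eps Heps. exists (Rmin del (eps / (Rabs d + 1))).
  assert (0 < Rabs d + 1) by (pose proof (Rabs_pos d); lra).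
  split. apply Rmin_pos; auto. apply Rdiv_lt_0_compat; auto.
  intros x [[_ Hx0] Hx]. simpl in *. unfold R_dist in *. rewrite Rminus_0_r in Hx.
  rewrite (Rmax_left 0 0) by lra.
  destruct (Rle_or_lt x 0) as [hx|hx].
  - rewrite Rmax_left by lra. rewrite Rminus_diag, Rabs_R0; auto.
  - rewrite Rmax_right by lra. rewrite Rabs_right in Hx by lra.
    assert (Hx1 : x < del) by (eapply Rlt_le_trans; [exact Hx| apply Rmin_l]).
    assert (Hx2 : x < eps / (Rabs d + 1)) by (eapply Rlt_le_trans; [exact Hx| apply Rmin_r]).
    eapply Rle_lt_trans. apply Hb; lra.
    apply Rmult_lt_reg_r with (/ (Rabs d + 1)). apply Rinv_0_lt_compat; auto.
    replace (x * (Rabs d + 1) * / (Rabs d + 1)) with x by (field; lra). exact Hx2.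
Qed.

Lemma Rpower_pos x a : 0 < Rpower x a.
Proof. unfold Rpower; apply exp_pos. Qed.

Lemma is_derive_Rpower_comp f x l a : is_derive f x l -> 0 < f x ->
  is_derive (fun t => Rpower (f t) a) x (a * Rpower (f x) (a - 1) * l).
Proof.
  intros Hd Hp.
  pose proof (derivable_pt_lim_power (f x) a Hp) as H. apply is_derive_Reals in H.
  replace (a * Rpower (f x) (a - 1) * l) with (l * (a * Rpower (f x) (a - 1))) by ring.
  apply (is_derive_comp (fun y => Rpower y a) f x). exact H. exact Hd.
Qed.

Lemma cont_Rpower_comp f x a : continuity_pt f x -> 0 < f x ->
  continuity_pt (fun t => Rpower (f t) a) x.
Proof.
  intros Hc Hp.
  change (continuity_pt (comp (fun y => Rpower y a) f) x).
  apply continuity_pt_comp; auto.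
  apply derivable_continuous_pt. exists (a * Rpower (f x) (a - 1)).
  apply derivable_pt_lim_power; auto.
Qed.

Lemma rp_le x y a : 0 < x <= y -> 0 <= a -> Rpower x a <= Rpower y a.
Proof. intros; apply Rle_Rpower_l; auto. Qed.

Lemma rp_lt x y a : 0 < x < y -> 0 < a -> Rpower x a < Rpower y a.
Proof. intros; apply Rlt_Rpower_l; auto. Qed.

Lemma rp_lt_neg x y a : 0 < x < y -> a < 0 -> Rpower y a < Rpower x a.
Proof.
  intros H Ha. unfold Rpower. apply exp_increasing.
  assert (ln x < ln y) by (apply ln_increasing; lra). nra.
Qed.

Lemma rp_le_neg x y a : 0 < x <= y -> a <= 0 -> Rpower y a <= Rpower x a.
Proof.
  intros H Ha. destruct (Req_dec x y) as [e|ne]. subst; lra.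
  destruct (Req_dec a 0) as [e|ne2]. subst. rewrite !Rpower_O; lra.
  left; apply rp_lt_neg; lra.
Qed.

Lemma rpow_abs_pos x a : 0 < x -> rpow_abs x a = Rpower x a.
Proof. intros H. unfold rpow_abs. destruct (Req_EM_T x 0); [lra|]. rewrite Rabs_right; lra. Qed.

Lemma rpow_abs_0 a : rpow_abs 0 a = 0.
Proof. unfold rpow_abs. destruct (Req_EM_T 0 0); lra. Qed.

Lemma rpow_abs_neg x a : x < 0 -> rpow_abs x a = Rpower (- x) a.
Proof. intros H. unfold rpow_abs. destruct (Req_EM_T x 0); [lra|]. rewrite Rabs_left; lra. Qed.

Lemma rpow_abs_nonneg x a : 0 <= rpow_abs x a.
Proof. unfold rpow_abs. destruct (Req_EM_T x 0); [lra|]. left; apply Rpower_pos. Qed.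

Lemma Rpower_p_id x p : 0 < x -> Rpower x (p - 1) * x = Rpower x p.
Proof.
  intros H. rewrite <- (Rpower_1 x) at 2 by auto. rewrite <- Rpower_plus. f_equal; ring.
Qed.

Lemma rc_mult f g a : rc f a -> rc g a -> rc (fun x => f x * g x) a.
Proof. intros H1 H2. unfold rc in *. apply (continuity_pt_mult (fun x => f (Rmax a x)) (fun x => g (Rmax a x))); auto. Qed.
Lemma rc_minus f g a : rc f a -> rc g a -> rc (fun x => f x - g x) a.
Proof. intros H1 H2. unfold rc in *. apply (continuity_pt_minus (fun x => f (Rmax a x)) (fun x => g (Rmax a x))); auto. Qed.
Lemma rc_plus f g a : rc f a -> rc g a -> rc (fun x => f x + g x) a.
Proof. intros H1 H2. unfold rc in *. apply (continuity_pt_plus (fun x => f (Rmax a x)) (fun x => g (Rmax a x))); auto. Qed.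
Lemma rc_const c a : rc (fun _ => c) a.
Proof. unfold rc. apply continuity_pt_const. intros x y; auto. Qed.
Lemma rc_pow n a : rc (fun x => x ^ n) a.
Proof. apply rc_of_cont. apply derivable_continuous_pt. apply derivable_pt_pow. Qed.
Lemma rc_id a : rc (fun x => x) a.
Proof. apply rc_of_cont. apply derivable_continuous_pt. apply derivable_pt_id. Qed.

Lemma pow_pred_id n t : 0 < t -> INR n * t ^ Init.Nat.pred n = t ^ n * INR n / t.
Proof.
  intros Ht. destruct n as [|m]. simpl. field; lra.
  simpl Init.Nat.pred. simpl pow. field. lra.
Qed.

Lemma Rpower_inv_base y a : 0 < y -> Rpower (/ y) a = Rpower y (- a).
Proof. intros H. unfold Rpower. rewrite ln_Rinv by auto. f_equal; ring. Qed.

Lemma deriv_pow_mul (n : nat) f df t : is_derive f t df ->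
  is_derive (fun x => x ^ n * f x) t (INR n * t ^ Init.Nat.pred n * f t + t ^ n * df).
Proof.
  intros H.
  assert (Hp : is_derive (fun x : R => x ^ n) t (INR n * t ^ Init.Nat.pred n)).
  { pose proof (is_derive_pow (fun x => x) n t 1 (is_derive_id t)) as P.
    replace (INR n * t ^ Init.Nat.pred n) with (INR n * 1 * t ^ Init.Nat.pred n) by ring. exact P. }
  exact (is_derive_mult _ _ t _ _ Hp H (fun a b => Rmult_comm a b)).
Qed.

Lemma deriv_cpow (n : nat) c t :
  is_derive (fun x => c * x ^ S n) t (c * (INR (S n) * t ^ n)).
Proof. auto_derive; auto. simpl. ring. Qed.

Lemma half_pow_bound (k : nat) : 0 < (/ 2) ^ k <= 1.
Proof.
  induction k as [|m IH]; simpl; [lra|]. nra.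
Qed.

Lemma rc_Rpower f a c : rc f a -> 0 < f a -> rc (fun t => Rpower (f t) c) a.
Proof.
  intros H Hp. unfold rc in *. apply (cont_Rpower_comp (fun x => f (Rmax a x))); auto.
  rewrite Rmax_left; lra.
Qed.

Lemma Rpower_div_r r e : 0 < r -> Rpower r e / r = Rpower r (e - 1).
Proof.
  intros Hr. replace (e - 1) with (e + Ropp 1) by ring. rewrite Rpower_plus, Rpower_Ropp, Rpower_1 by auto.
  unfold Rdiv; ring.
Qed.

Lemma rc_opp f a : rc f a -> rc (fun x => - f x) a.
Proof. intros H. unfold rc in *. apply (continuity_pt_opp (fun x => f (Rmax a x))). exact H. Qed.

Section Main.
Variables (n : nat) (p M : R) (u u1 u2 : R -> R).
Hypothesis Hp : 1 < p.
Hypothesis Hd1 : forall r, 0 < r -> is_derive u r (u1 r).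
Hypothesis Hd2 : forall r, 0 < r -> is_derive u1 r (u2 r).
Hypothesis Hq1 : filterlim (fun h => (u h - u 0)/h) (at_right 0) (locally (u1 0)).
Hypothesis Hq2 : filterlim (fun h => (u1 h - u1 0)/h) (at_right 0) (locally (u2 0)).
Hypothesis Hpos : forall r, 0 <= r -> 0 <= u r.
Hypothesis H10 : u1 0 = 0.
Hypothesis HE : solves_E (S n) p M u u1 u2.
Hypothesis Hone : u 0 = 1.

Let q := 2 * p / (p + 1).

Lemma q_gt1 : 1 < q.
Proof. unfold q. apply Rmult_lt_reg_r with (p + 1). lra. field_simplify; lra. Qed.

Lemma ode t : 0 < t -> u2 t = - (INR n / t) * u1 t - rpow_abs (u t) (p - 1) * u t
   - M * rpow_abs (u1 t) q.
Proof.
  intros Ht. pose proof (HE t Ht) as E. rewrite S_INR in E.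
  replace (INR n + 1 - 1) with (INR n) in E by ring. unfold q. lra.
Qed.

Lemma contu s : 0 < s -> continuity_pt u s.
Proof. intros; eapply cont_of_derive; apply Hd1; auto. Qed.
Lemma contu1 s : 0 < s -> continuity_pt u1 s.
Proof. intros; eapply cont_of_derive; apply Hd2; auto. Qed.
Lemma rcu s : 0 <= s -> rc u s.
Proof. intros [H|H]. apply rc_of_cont, contu; auto. subst. eapply rc_from_quot; eauto. Qed.
Lemma rcu1 s : 0 <= s -> rc u1 s.
Proof. intros [H|H]. apply rc_of_cont, contu1; auto. subst. eapply rc_from_quot; eauto. Qed.

Lemma Fu_nonneg t : 0 <= t -> 0 <= rpow_abs (u t) (p - 1) * u t.
Proof. intros; apply Rmult_le_pos; [apply rpow_abs_nonneg| apply Hpos; auto]. Qed.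

Lemma u1_nonpos t : 0 <= t -> u1 t <= 0.
Proof.
  intros [Ht|Ht]; [| subst; lra].
  destruct (Rle_or_lt (u1 t) 0) as [h|Hut]; auto. exfalso.
  destruct (last_point (fun x => - u1 x) 0 t) as [s0 [Hs0 [Hs1 Hs2]]]; [lra| |].
  { intros x Hx. apply continuity_pt_opp. apply contu1; lra. }
  assert (Hus0 : u1 s0 <= 0) by (destruct Hs1 as [e|h]; [subst; lra| lra]).
  assert (Hst : s0 < t) by (destruct (Req_dec s0 t); [subst; lra| lra]).
  assert (Hpo : forall x, s0 < x <= t -> 0 < u1 x) by (intros x Hx; specialize (Hs2 x Hx); lra).
  pose proof q_gt1 as Hq.
  set (c := q - 1).
  set (W := fun x => Rpower (u1 x) (1 - q) + c * Rabs M * x).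
  set (dW := fun x => (1 - q) * Rpower (u1 x) (1 - q - 1) * u2 x + c * Rabs M).
  assert (HdW : forall x, s0 < x <= t -> is_derive W x (dW x)).
  { intros x Hx. unfold W, dW.
    assert (A1 := is_derive_Rpower_comp u1 x (u2 x) (1 - q) (Hd2 x ltac:(lra)) (Hpo x Hx)).
    assert (A2 : is_derive (fun x => c * Rabs M * x) x (c * Rabs M)) by (auto_derive; auto; ring).
    exact (is_derive_plus _ _ x _ _ A1 A2). }
  assert (HdWp : forall x, s0 < x <= t -> 0 <= dW x).
  { intros x Hx. unfold dW. assert (Hx0 : 0 < x) by lra. pose proof (Hpo x Hx) as Hu1.
    assert (Hu2 : u2 x <= Rabs M * Rpower (u1 x) q).
    { rewrite (ode x Hx0). rewrite (rpow_abs_pos (u1 x)) by auto.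
      assert (0 <= INR n / x * u1 x).
      { apply Rmult_le_pos; [|lra]. apply Rmult_le_pos; [apply pos_INR| left; apply Rinv_0_lt_compat; lra]. }
      pose proof (Fu_nonneg x ltac:(lra)).
      assert (- M * Rpower (u1 x) q <= Rabs M * Rpower (u1 x) q).
      { apply Rmult_le_compat_r. left; apply Rpower_pos. rewrite <- Rabs_Ropp. apply Rle_abs. }
      lra. }
    assert (E1 : Rpower (u1 x) (1 - q - 1) * Rpower (u1 x) q = 1).
    { rewrite <- Rpower_plus. replace (1 - q - 1 + q) with 0 by ring. apply Rpower_O; auto. }
    assert (Hr : 0 < Rpower (u1 x) (1 - q - 1)) by apply Rpower_pos.
    assert (Rpower (u1 x) (1 - q - 1) * u2 x <= Rabs M).
    { assert (E2 : Rpower (u1 x) (1 - q - 1) * (Rabs M * Rpower (u1 x) q) = Rabs M).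
      { rewrite <- Rmult_assoc, (Rmult_comm _ (Rabs M)), Rmult_assoc, E1; ring. }
      rewrite <- E2. apply Rmult_le_compat_l; lra. }
    unfold c. nra. }
  assert (HWt : 0 < W t).
  { unfold W. pose proof (Rpower_pos (u1 t) (1 - q)). pose proof (Rabs_pos M).
    assert (0 <= c * Rabs M * t) by (apply Rmult_le_pos; [apply Rmult_le_pos; unfold c; lra|lra]). lra. }
  set (eta := Rpower (W t) (1 / (1 - q))).
  assert (Heta : 0 < eta) by apply Rpower_pos.
  destruct (rc_elim u1 s0 (rcu1 s0 ltac:(lra)) eta Heta) as [del [Hdel Hx]].
  set (tau := s0 + Rmin del (t - s0) / 2).
  assert (Hm1 : Rmin del (t - s0) <= del) by apply Rmin_l.
  assert (Hm2 : Rmin del (t - s0) <= t - s0) by apply Rmin_r.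
  assert (Hm3 : 0 < Rmin del (t - s0)) by (apply Rmin_pos; lra).
  assert (Htau : s0 < tau < t) by (unfold tau; lra).
  specialize (Hx tau ltac:(unfold tau; lra)). apply Rabs_def2 in Hx.
  assert (Hut1 : 0 < u1 tau) by (apply Hpo; lra).
  assert (Hlt : W t < Rpower (u1 tau) (1 - q)).
  { replace (W t) with (Rpower eta (1 - q)).
    apply rp_lt_neg; lra.
    unfold eta. rewrite Rpower_mult. replace (1 / (1 - q) * (1 - q)) with 1 by (field; lra).
    apply Rpower_1; auto. }
  assert (HWtau : W tau <= W t).
  { apply (mono W dW tau t). lra.
    apply rc_of_cont. eapply cont_of_derive. apply HdW; lra.
    intros x Hx'; apply HdW; lra. intros x Hx'; apply HdWp; lra. }
  assert (Rpower (u1 tau) (1 - q) <= W tau).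
  { unfold W. assert (0 <= c * Rabs M * tau).
    apply Rmult_le_pos; [apply Rmult_le_pos; [unfold c; lra| apply Rabs_pos]| lra]. lra. }
  lra.
Qed.

Lemma u_noninc a b : 0 <= a <= b -> u b <= u a.
Proof.
  intros H. destruct (Req_dec a b) as [e|ne]; [subst; lra|].
  assert (- u a <= - u b); [|lra].
  apply (mono (fun x => - u x) (fun x => - u1 x) a b). lra.
  apply rc_opp, rcu; lra.
  intros x Hx. exact (is_derive_opp u x (u1 x) (Hd1 x ltac:(lra))).
  intros x Hx. pose proof (u1_nonpos x ltac:(lra)); lra.
Qed.

Lemma u_le1 r : 0 <= r -> u r <= 1.
Proof. intros; rewrite <- Hone; apply u_noninc; lra. Qed.


Lemma u_pos_before s t : 0 <= t <= s -> 0 < u s -> 0 < u t.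
Proof. intros H Hs. pose proof (u_noninc t s H). lra. Qed.

Lemma Fu_eq t : 0 < u t -> rpow_abs (u t) (p - 1) * u t = Rpower (u t) p.
Proof. intros H. rewrite rpow_abs_pos by auto. apply Rpower_p_id; auto. Qed.

Lemma G_bound t : 0 <= - u1 t -> forall X, 0 < X -> - u1 t < Rpower X (1 / q) ->
  rpow_abs (u1 t) q < X.
Proof.
  intros H0 X HX H. pose proof q_gt1.
  destruct (Req_dec (u1 t) 0) as [e|ne]. rewrite e, rpow_abs_0; auto.
  rewrite rpow_abs_neg by lra.
  replace X with (Rpower (Rpower X (1 / q)) q).
  apply rp_lt; lra.
  rewrite Rpower_mult. replace (1 / q * q) with 1 by (field; lra). apply Rpower_1; auto.
Qed.


Definition c1 := (/ 2) ^ n * Rpower (2 * Rabs M + 1) (- (1 / q)).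

Lemma step_t0 s : 0 < s -> 0 < u s -> exists t0, 0 <= t0 <= s /\
  (t0 = 0 \/ (M < 0 /\ Rpower (Rpower (u t0) p / (2 * Rabs M)) (1 / q) <= - u1 t0)) /\
  forall t, t0 < t <= s -> rpow_abs (u t) (p - 1) * u t / 2 <=
     rpow_abs (u t) (p - 1) * u t + M * rpow_abs (u1 t) q.
Proof.
  intros Hs Hus.
  destruct (Rlt_or_le M 0) as [HM|HM].
  - destruct (last_point (fun t => - u1 t - Rpower (Rpower (u t) p / (2 * Rabs M)) (1 / q)) 0 s)
      as [t0 [Ht0 [Ht1 Ht2]]]; [lra| |].
    { intros t Ht. apply continuity_pt_minus. apply continuity_pt_opp, contu1; lra.
      apply cont_Rpower_comp. 
      apply (continuity_pt_mult (fun t => Rpower (u t) p) (fun _ => / (2 * Rabs M))).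
      apply cont_Rpower_comp. apply contu; lra. apply (u_pos_before s); auto; lra.
      apply continuity_pt_const; intros x y; auto.
      apply Rdiv_lt_0_compat. apply Rpower_pos. rewrite Rabs_left; lra. }
    exists t0. split; auto. split.
    + destruct Ht1 as [e|h]; [left; auto| right]. split; auto. lra.
    + intros t Ht. specialize (Ht2 t Ht). simpl in Ht2.
      assert (Hut : 0 < u t) by (apply (u_pos_before s); auto; lra).
      rewrite Fu_eq by auto.
      assert (HG : rpow_abs (u1 t) q < Rpower (u t) p / (2 * Rabs M)).
      { apply G_bound. pose proof (u1_nonpos t ltac:(lra)); lra.
        apply Rdiv_lt_0_compat. apply Rpower_pos. rewrite Rabs_left; lra. lra. }
      rewrite Rabs_left in HG by lra.
      assert (- M * rpow_abs (u1 t) q < Rpower (u t) p / 2).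
      { replace (Rpower (u t) p / 2) with (- M * (Rpower (u t) p / (2 * - M))) by (field; lra).
        apply Rmult_lt_compat_l; lra. }
      lra.
  - exists 0. split; [lra|]. split; [left; auto|].
    intros t Ht. pose proof (Fu_nonneg t ltac:(lra)).
    assert (0 <= M * rpow_abs (u1 t) q) by (apply Rmult_le_pos; auto; apply rpow_abs_nonneg).
    lra.
Qed.


Lemma dich s : 0 < s -> 0 < u s ->
  c1 * Rpower (u s) ((p + 1) / 2) <= - u1 s \/
  Rpower (u s) p * s / (4 * INR (S n)) <= - u1 s.
Proof.
  intros Hs Hus. pose proof q_gt1 as Hq.
  destruct (step_t0 s Hs Hus) as [t0 [Ht0 [Ht1 Ht2]]].
  set (Fs := Rpower (u s) p).
  set (NN := INR (S n)).
  assert (HNN : 0 < NN) by (unfold NN; apply lt_0_INR; lia).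
  set (h := fun t => t ^ n * (- u1 t) - (Fs / (2 * NN)) * t ^ S n).
  set (dh := fun t => t ^ n * (rpow_abs (u t) (p - 1) * u t + M * rpow_abs (u1 t) q - Fs / 2)).
  assert (Hdh : forall t, 0 < t -> is_derive h t (dh t)).
  { intros t Ht.
    assert (A : is_derive (fun x => - u1 x) t (- u2 t)) by exact (is_derive_opp u1 t (u2 t) (Hd2 t Ht)).
    pose proof (deriv_pow_mul n _ _ t A) as B.
    pose proof (deriv_cpow n (Fs / (2 * NN)) t) as C.
    pose proof (is_derive_minus _ _ t _ _ B C) as D.
    unfold h, dh. 
    match type of D with is_derive _ _ ?l => replace (t ^ n * (rpow_abs (u t) (p - 1) * u t + M * rpow_abs (u1 t) q - Fs / 2)) with l end.
    exact D.
    unfold minus, plus, opp; simpl. rewrite pow_pred_id by auto. rewrite (ode t Ht).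
    change (match n with 0%nat => 1 | S _ => INR n + 1 end) with (INR (S n)). unfold NN. field. split; [apply not_0_INR; lia| lra]. }
  assert (Hdhp : forall t, t0 < t <= s -> 0 <= dh t).
  { intros t Ht. unfold dh. apply Rmult_le_pos. apply pow_le; lra.
    specialize (Ht2 t Ht).
    assert (Hut : 0 < u t) by (apply (u_pos_before s); auto; lra).
    assert (Fs <= rpow_abs (u t) (p - 1) * u t).
    { rewrite Fu_eq by auto. unfold Fs. apply rp_le; [split; auto; apply u_noninc; lra| lra]. }
    lra. }
  assert (Hmono : h t0 <= h s).
  { destruct (Req_dec t0 s) as [e|ne]; [rewrite e; lra|].
    apply (mono h dh t0 s). lra.
    unfold h. apply rc_minus. apply rc_mult. apply rc_pow. apply rc_opp, rcu1; lra.
    apply rc_mult. apply rc_const. apply rc_pow.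
    intros t Ht; apply Hdh; lra. auto. }
  unfold h in Hmono.
  assert (Hv0 : 0 <= - u1 t0) by (pose proof (u1_nonpos t0 ltac:(lra)); lra).
  assert (Hsn : 0 < s ^ n) by (apply pow_lt; lra).
  assert (Hpow : t0 ^ S n <= s ^ S n) by (apply pow_incr; lra).
  assert (HFs : 0 < Fs) by apply Rpower_pos.
  assert (Hh0 : 0 <= t0 ^ n * - u1 t0) by (apply Rmult_le_pos; auto; apply pow_le; lra).
  assert (Hhalf : 0 < (/ 2) ^ n <= 1) by (apply half_pow_bound).
  assert (Es : s ^ S n = s * s ^ n) by (simpl; ring).
  assert (Hcc : 0 < Fs / (2 * NN)) by (apply Rdiv_lt_0_compat; lra).
  destruct (Rle_or_lt t0 (s / 2)) as [hc|hc].
  - right.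
    assert (Hp2 : t0 ^ S n <= (s / 2) ^ S n) by (apply pow_incr; lra).
    assert (Hp3 : (s / 2) ^ S n <= s ^ S n / 2).
    { unfold Rdiv at 1. rewrite Rpow_mult_distr. simpl ((/2) ^ S n). rewrite Es.
      assert (0 < s * s ^ n) by (apply Rmult_lt_0_compat; lra).
      nra. }
    assert (Fs / (2 * NN) * (s ^ S n / 2) <= Fs / (2 * NN) * (s ^ S n - t0 ^ S n)).
    { apply Rmult_le_compat_l; lra. }
    assert (s ^ n * (Fs * s / (4 * NN)) <= s ^ n * - u1 s).
    { replace (s ^ n * (Fs * s / (4 * NN))) with (Fs / (2 * NN) * (s ^ S n / 2)) by
        (rewrite Es; field; lra).
      lra. }
    apply Rmult_le_reg_l with (s ^ n); auto.
  - left.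
    assert (Ht0n : t0 <> 0) by lra.
    destruct Ht1 as [e|[HM HR]]; [lra|].
    set (K := 2 * Rabs M + 1).
    assert (HK : 0 < 2 * Rabs M) by (rewrite Rabs_left; lra).
    assert (Hut0 : 0 < u t0) by (apply (u_pos_before s); auto; lra).
    assert (HFt0 : Fs <= Rpower (u t0) p).
    { unfold Fs. apply rp_le; [split; auto; apply u_noninc; lra| lra]. }
    assert (H1 : Rpower (Fs / K) (1 / q) <= - u1 t0).
    { eapply Rle_trans; [|exact HR]. apply rp_le.
      split. apply Rdiv_lt_0_compat; unfold K; lra.
      unfold Rdiv. apply Rmult_le_compat; try lra.
      left; apply Rinv_0_lt_compat; unfold K; lra.
      apply Rinv_le_contravar; unfold K; lra.
      apply Rlt_le, Rdiv_lt_0_compat; lra. }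
    assert (E1 : Rpower (Fs / K) (1 / q) = Rpower (u s) ((p + 1) / 2) * Rpower K (- (1 / q))).
    { unfold Rdiv at 1. rewrite <- Rpower_mult_distr by (auto; apply Rinv_0_lt_compat; unfold K; lra).
      rewrite Rpower_inv_base by (unfold K; lra). unfold Fs. rewrite Rpower_mult.
      f_equal. f_equal. unfold q. field. lra. }
    assert (Hp2 : (s / 2) ^ n <= t0 ^ n) by (apply pow_incr; lra).
    assert (s ^ n * (/ 2) ^ n * - u1 t0 <= s ^ n * - u1 s).
    { assert (Fs / (2 * NN) * 0 <= Fs / (2 * NN) * (s ^ S n - t0 ^ S n)) by
        (apply Rmult_le_compat_l; lra).
      assert (HH2 : t0 ^ n * - u1 t0 <= s ^ n * - u1 s) by lra.
      eapply Rle_trans; [|exact HH2].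
      apply Rmult_le_compat_r; auto. unfold Rdiv in Hp2. rewrite Rpow_mult_distr in Hp2. exact Hp2. }
    assert (HH3 : (/ 2) ^ n * - u1 t0 <= - u1 s).
    { apply Rmult_le_reg_l with (s ^ n); auto. rewrite <- Rmult_assoc; auto. }
    unfold c1. fold K. rewrite E1 in H1.
    eapply Rle_trans; [|exact HH3].
    replace ((/ 2) ^ n * Rpower K (- (1 / q)) * Rpower (u s) ((p + 1) / 2)) with
      ((/ 2) ^ n * (Rpower (u s) ((p + 1) / 2) * Rpower K (- (1 / q)))) by ring.
    apply Rmult_le_compat_l; lra.
Qed.


Definition aa := (p - 1) / 2.
Definition sig := Rmin (aa * c1) (Rmin 1 (aa / (4 * INR (S n)))).

Lemma c1_pos : 0 < c1.
Proof. unfold c1. apply Rmult_lt_0_compat. apply half_pow_bound. apply Rpower_pos. Qed.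

Lemma aa_pos : 0 < aa.
Proof. unfold aa; lra. Qed.

Lemma sig_props : 0 < sig /\ sig <= aa * c1 /\ sig * sig <= aa / (4 * INR (S n)).
Proof.
  pose proof c1_pos. pose proof aa_pos.
  assert (HN : 0 < INR (S n)) by (apply lt_0_INR; lia).
  assert (0 < aa / (4 * INR (S n))) by (apply Rdiv_lt_0_compat; lra).
  unfold sig. split. apply Rmin_pos. apply Rmult_lt_0_compat; auto. apply Rmin_pos; lra.
  split. apply Rmin_l.
  assert (h1 : Rmin (aa * c1) (Rmin 1 (aa / (4 * INR (S n)))) <= Rmin 1 (aa / (4 * INR (S n)))) by apply Rmin_r.
  assert (h2 : Rmin 1 (aa / (4 * INR (S n))) <= 1) by apply Rmin_l.
  assert (h3 : Rmin 1 (aa / (4 * INR (S n))) <= aa / (4 * INR (S n))) by apply Rmin_r.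
  assert (h4 : 0 < Rmin (aa * c1) (Rmin 1 (aa / (4 * INR (S n))))).
  { apply Rmin_pos. apply Rmult_lt_0_compat; auto. apply Rmin_pos; lra. }
  nra.
Qed.

Lemma decay_A r : 0 < r -> 0 < u r -> sig * r <= Rpower (u r) (- aa).
Proof.
  intros Hr Hur. destruct sig_props as [Hs1 [Hs2 Hs3]]. pose proof aa_pos as Ha.
  destruct (Rle_or_lt (sig * r) (Rpower (u r) (- aa))) as [h|h]; auto. exfalso.
  set (H := fun t => Rpower (u t) (- aa) - sig * t).
  destruct (last_point H 0 r) as [t0 [Ht0 [Ht1 Ht2]]]; [lra| |].
  { intros t Ht. unfold H. apply continuity_pt_minus.
    apply cont_Rpower_comp. apply contu; lra. apply (u_pos_before r); auto; lra.
    apply continuity_pt_mult. apply continuity_pt_const; intros x y; auto.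
    apply derivable_continuous_pt, derivable_pt_id. }
  assert (HH0 : 0 <= H t0).
  { destruct Ht1 as [e|e]; auto. subst. unfold H. rewrite Hone, Rmult_0_r, Rminus_0_r.
    left; apply Rpower_pos. }
  assert (Htr : t0 < r) by (destruct (Req_dec t0 r) as [e|e]; [subst; unfold H in HH0; lra| lra]).
  set (dH := fun t => - aa * Rpower (u t) (- aa - 1) * u1 t - sig).
  assert (HdH : forall t, 0 < t <= r -> is_derive H t (dH t)).
  { intros t Ht. unfold H, dH.
    assert (A1 := is_derive_Rpower_comp u t (u1 t) (- aa) (Hd1 t ltac:(lra)) (u_pos_before r t ltac:(lra) Hur)).
    assert (A2 : is_derive (fun x => sig * x) t sig) by (auto_derive; auto; ring).
    exact (is_derive_minus _ _ t _ _ A1 A2). }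
  assert (Hmono : H t0 <= H r).
  { apply (mono H dH t0 r). lra.
    unfold H. apply rc_minus. apply rc_Rpower. apply rcu; lra. apply (u_pos_before r); auto; lra.
    apply rc_mult. apply rc_const. apply rc_id.
    intros t Ht; apply HdH; lra.
    intros t Ht. specialize (Ht2 t Ht). unfold H in Ht2. unfold dH.
    assert (Ht0' : 0 < t) by lra.
    assert (Hut : 0 < u t) by (apply (u_pos_before r); auto; lra).
    set (X := Rpower (u t) aa).
    assert (HX : 0 < X) by apply Rpower_pos.
    assert (EA : Rpower (u t) (- aa) * X = 1).
    { unfold X. rewrite <- Rpower_plus. replace (- aa + aa) with 0 by ring. apply Rpower_O; auto. }
    assert (HA : 0 < Rpower (u t) (- aa)) by apply Rpower_pos.
    assert (Hv : 0 <= - u1 t) by (pose proof (u1_nonpos t ltac:(lra)); lra).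
    assert (HB : 0 < Rpower (u t) (- aa - 1)) by apply Rpower_pos.
    destruct (dich t Ht0' Hut) as [D|D].
    - assert (E : Rpower (u t) (- aa - 1) * Rpower (u t) ((p + 1) / 2) = 1).
      { rewrite <- Rpower_plus. replace (- aa - 1 + (p + 1) / 2) with 0 by (unfold aa; field).
        apply Rpower_O; auto. }
      assert (aa * Rpower (u t) (- aa - 1) * (c1 * Rpower (u t) ((p + 1) / 2)) <=
              aa * Rpower (u t) (- aa - 1) * - u1 t).
      { apply Rmult_le_compat_l; auto. apply Rmult_le_pos; lra. }
      assert (aa * Rpower (u t) (- aa - 1) * (c1 * Rpower (u t) ((p + 1) / 2)) = aa * c1).
      { transitivity (aa * c1 * (Rpower (u t) (- aa - 1) * Rpower (u t) ((p + 1) / 2))); [ring|].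
        rewrite E; ring. }
      nra.
    - assert (E : Rpower (u t) (- aa - 1) * Rpower (u t) p = X).
      { unfold X. rewrite <- Rpower_plus. f_equal. unfold aa; field. }
      assert (HN : 0 < INR (S n)) by (apply lt_0_INR; lia).
      assert (aa * Rpower (u t) (- aa - 1) * (Rpower (u t) p * t / (4 * INR (S n))) <=
              aa * Rpower (u t) (- aa - 1) * - u1 t).
      { apply Rmult_le_compat_l; auto. apply Rmult_le_pos; lra. }
      assert (aa * Rpower (u t) (- aa - 1) * (Rpower (u t) p * t / (4 * INR (S n))) =
              aa / (4 * INR (S n)) * t * X).
      { rewrite <- E. field. lra. }
      assert (1 < sig * t * X) by nra.
      assert (aa / (4 * INR (S n)) * t * X >= sig * sig * t * X).
      { apply Rle_ge. repeat apply Rmult_le_compat_r; try lra. }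
      nra. }
  unfold H in Hmono, HH0. lra.
Qed.

Definition C0 := Rpower sig (- (2 / (p - 1))).

Lemma decay r : 0 < r -> u r <= C0 * Rpower r (- (2 / (p - 1))).
Proof.
  intros Hr. destruct sig_props as [Hs1 _]. pose proof aa_pos.
  destruct (Rle_or_lt (u r) 0) as [h|h].
  { pose proof (Rpower_pos sig (- (2 / (p - 1)))). pose proof (Rpower_pos r (- (2 / (p - 1)))).
    unfold C0. nra. }
  pose proof (decay_A r Hr h) as D.
  unfold C0. rewrite Rpower_mult_distr by auto.
  replace (u r) with (Rpower (Rpower (u r) (- aa)) (- (2 / (p - 1)))).
  apply rp_le_neg. split; auto. apply Rmult_lt_0_compat; auto.
  assert (0 < 2 / (p - 1)) by (apply Rdiv_lt_0_compat; lra). lra.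
  rewrite Rpower_mult. replace (- aa * - (2 / (p - 1))) with 1 by (unfold aa; field; lra).
  apply Rpower_1; auto.
Qed.


Lemma g_deriv t : 0 < t -> is_derive (fun x => x ^ n * - u1 x) t
   (t ^ n * (rpow_abs (u t) (p - 1) * u t + M * rpow_abs (u1 t) q)).
Proof.
  intros Ht.
  assert (A : is_derive (fun x => - u1 x) t (- u2 t)) by exact (is_derive_opp u1 t (u2 t) (Hd2 t Ht)).
  pose proof (deriv_pow_mul n _ _ t A) as B.
  match type of B with is_derive _ _ ?l => replace (t ^ n * (rpow_abs (u t) (p - 1) * u t + M * rpow_abs (u1 t) q)) with l end.
  exact B.
  rewrite pow_pred_id by auto. rewrite (ode t Ht). field. lra.
Qed.

Lemma dbound_pos r : 0 < r -> 0 <= M -> - u1 r * r <= 2 ^ n * (u r).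
Proof.
  intros Hr HM.
  set (vr := - u1 r).
  assert (Hvr : 0 <= vr) by (unfold vr; pose proof (u1_nonpos r ltac:(lra)); lra).
  assert (Hg : forall t, r <= t <= 2 * r -> r ^ n * vr <= t ^ n * - u1 t).
  { intros t Ht. destruct (Req_dec r t) as [e|ne]; [subst; unfold vr; lra|].
    apply (mono (fun x => x ^ n * - u1 x) (fun x => x ^ n * (rpow_abs (u x) (p - 1) * u x + M * rpow_abs (u1 x) q)) r t). lra.
    apply rc_mult. apply rc_pow. apply rc_opp, rcu1; lra.
    intros x Hx. apply g_deriv; lra.
    intros x Hx. apply Rmult_le_pos. apply pow_le; lra.
    pose proof (Fu_nonneg x ltac:(lra)).
    assert (0 <= M * rpow_abs (u1 x) q) by (apply Rmult_le_pos; auto; apply rpow_abs_nonneg). lra. }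
  pose proof (half_pow_bound n) as Hh.
  assert (H2n : (/ 2) ^ n * 2 ^ n = 1) by (rewrite <- Rpow_mult_distr; replace (/ 2 * 2) with 1 by field; apply pow1).
  assert (Hv : forall t, r <= t <= 2 * r -> (/ 2) ^ n * vr <= - u1 t).
  { intros t Ht. specialize (Hg t Ht).
    assert (Hrn : 0 < r ^ n) by (apply pow_lt; lra).
    assert (Htn : t ^ n <= 2 ^ n * r ^ n) by (rewrite <- Rpow_mult_distr; apply pow_incr; lra).
    assert (Hvt : 0 <= - u1 t) by (pose proof (u1_nonpos t ltac:(lra)); lra).
    assert (r ^ n * vr <= 2 ^ n * r ^ n * - u1 t) by (eapply Rle_trans; [exact Hg| apply Rmult_le_compat_r; auto]).
    apply Rmult_le_reg_l with (r ^ n * 2 ^ n). apply Rmult_lt_0_compat; auto. apply pow_lt; lra.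
    replace (r ^ n * 2 ^ n * ((/ 2) ^ n * vr)) with (r ^ n * vr * ((/ 2) ^ n * 2 ^ n)) by ring.
    rewrite H2n. nra. }
  assert (Hk : - (u r + (/ 2) ^ n * vr * r) <= - (u (2 * r) + (/ 2) ^ n * vr * (2 * r))).
  { apply (mono (fun x => - (u x + (/ 2) ^ n * vr * x)) (fun x => - (u1 x + (/ 2) ^ n * vr)) r (2 * r)). lra.
    apply rc_opp. apply rc_plus. apply rcu; lra. apply rc_mult. apply rc_const. apply rc_id.
    intros x Hx. 
    assert (A1 : is_derive (fun x => u x + (/ 2) ^ n * vr * x) x (u1 x + (/ 2) ^ n * vr)).
    { assert (A2 : is_derive (fun x => (/ 2) ^ n * vr * x) x ((/ 2) ^ n * vr)) by (auto_derive; auto; ring).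
      exact (is_derive_plus _ _ x _ _ (Hd1 x ltac:(lra)) A2). }
    exact (is_derive_opp _ x _ A1).
    intros x Hx. specialize (Hv x ltac:(lra)). lra. }
  pose proof (Hpos (2 * r) ltac:(lra)).
  assert ((/ 2) ^ n * vr * r <= u r) by lra.
  replace (vr * r) with (2 ^ n * ((/ 2) ^ n * vr * r)).
  apply Rmult_le_compat_l; auto. apply pow_le; lra.
  transitivity ((/ 2) ^ n * 2 ^ n * vr * r); [ring| rewrite H2n; ring].
Qed.


Lemma Fu_mono a b : 0 <= a <= b -> rpow_abs (u b) (p - 1) * u b <= rpow_abs (u a) (p - 1) * u a.
Proof.
  intros H. pose proof (u_noninc a b H). pose proof (Hpos b ltac:(lra)).
  destruct (Req_dec (u b) 0) as [e|ne]. rewrite e, Rmult_0_r. apply Fu_nonneg; lra.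
  rewrite !Fu_eq by lra. apply rp_le; lra.
Qed.

Lemma dbound_neg r : 0 < r -> M < 0 ->
  - u1 r <= rpow_abs (rpow_abs (u (r / 2)) (p - 1) * u (r / 2) / Rabs M) (1 / q) \/
  - u1 r * r <= 2 * u (r / 2).
Proof.
  intros Hr HM. pose proof q_gt1 as Hq.
  set (T := rpow_abs (rpow_abs (u (r / 2)) (p - 1) * u (r / 2) / Rabs M) (1 / q)).
  destruct (Rle_or_lt (- u1 r) T) as [h|h]; [left; auto| right].
  assert (HMa : Rabs M = - M) by (apply Rabs_left; auto).
  assert (HT0 : 0 <= T) by apply rpow_abs_nonneg.
  destruct (last_point (fun t => T - - u1 t) (r / 2) r) as [t0 [Ht0 [Ht1 Ht2]]]; [lra| |].
  { intros t Ht. apply continuity_pt_minus. apply continuity_pt_const; intros x y; auto.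
    apply continuity_pt_opp, contu1; lra. }
  assert (Hu2 : forall t, t0 < t <= r -> 0 < u2 t).
  { intros t Ht. specialize (Ht2 t Ht). simpl in Ht2.
    assert (Ht0' : 0 < t) by lra.
    rewrite (ode t Ht0').
    assert (Hvt : 0 < - u1 t) by lra.
    rewrite (rpow_abs_neg (u1 t)) by lra.
    assert (HF : rpow_abs (u t) (p - 1) * u t <= rpow_abs (u (r / 2)) (p - 1) * u (r / 2)) by (apply Fu_mono; lra).
    assert (HF2 : rpow_abs (u (r / 2)) (p - 1) * u (r / 2) < - M * Rpower (- u1 t) q).
    { set (F := rpow_abs (u (r / 2)) (p - 1) * u (r / 2)).
      assert (HF0 : 0 <= F) by (apply Fu_nonneg; lra).
      destruct (Req_dec F 0) as [e|ne].
      - rewrite e. apply Rmult_lt_0_compat; [lra| apply Rpower_pos].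
      - assert (HFp : 0 < F / Rabs M) by (apply Rdiv_lt_0_compat; lra).
        unfold T in Ht2. fold F in Ht2. rewrite rpow_abs_pos in Ht2 by auto.
        assert (Rpower (Rpower (F / Rabs M) (1 / q)) q < Rpower (- u1 t) q).
        { apply rp_lt; [split; [apply Rpower_pos| lra]| lra]. }
        rewrite Rpower_mult in H. replace (1 / q * q) with 1 in H by (field; lra).
        rewrite Rpower_1 in H by auto.
        rewrite HMa in H.
        apply Rmult_lt_reg_r with (/ - M). apply Rinv_0_lt_compat; lra.
        replace (- M * Rpower (- u1 t) q * / - M) with (Rpower (- u1 t) q) by (field; lra).
        exact H. }
    assert (0 <= INR n / t * - u1 t).
    { apply Rmult_le_pos; [|lra]. apply Rmult_le_pos; [apply pos_INR| left; apply Rinv_0_lt_compat; lra]. }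
    lra. }
  assert (Hmon : forall a, t0 <= a <= r -> u1 a <= u1 r).
  { intros a Ha. destruct (Req_dec a r) as [e|ne]; [subst; lra|].
    apply (mono u1 u2 a r). lra. apply rcu1; lra.
    intros x Hx; apply Hd2; lra. intros x Hx; left; apply Hu2; lra. }
  assert (Ht0e : t0 = r / 2).
  { destruct Ht1 as [e|e]; auto. specialize (Hmon t0 ltac:(lra)). simpl in e. lra. }
  subst t0.
  set (vr := - u1 r).
  assert (Hk : - (u (r / 2) + vr * (r / 2)) <= - (u r + vr * r)).
  { apply (mono (fun x => - (u x + vr * x)) (fun x => - (u1 x + vr)) (r / 2) r). lra.
    apply rc_opp. apply rc_plus. apply rcu; lra. apply rc_mult. apply rc_const. apply rc_id.
    intros x Hx.
    assert (A1 : is_derive (fun x => u x + vr * x) x (u1 x + vr)).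
    { assert (A2 : is_derive (fun x => vr * x) x vr) by (auto_derive; auto; ring).
      exact (is_derive_plus _ _ x _ _ (Hd1 x ltac:(lra)) A2). }
    exact (is_derive_opp _ x _ A1).
    intros x Hx. specialize (Hmon x ltac:(lra)). unfold vr. lra. }
  pose proof (Hpos r ltac:(lra)). fold vr. lra.
Qed.


Definition Dc := 2 ^ n * C0 + 2 * C0 * Rpower 2 (2 / (p - 1)) +
  Rpower (Rabs M) (- (1 / q)) * Rpower (C0 * Rpower 2 (2 / (p - 1))) ((p + 1) / 2).

Lemma C0_pos : 0 < C0.
Proof. unfold C0. apply Rpower_pos. Qed.

Lemma u_half r : 0 < r -> u (r / 2) <= C0 * Rpower 2 (2 / (p - 1)) * Rpower r (- (2 / (p - 1))).
Proof.
  intros Hr. eapply Rle_trans. apply decay; lra.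
  unfold Rdiv at 1. rewrite <- Rpower_mult_distr by lra.
  rewrite Rpower_inv_base by lra. rewrite Ropp_involutive. lra.
Qed.

Lemma final_d r : 0 < r -> - u1 r <= Dc * Rpower r (- ((p + 1) / (p - 1))).
Proof.
  intros Hr. pose proof C0_pos. pose proof q_gt1 as Hq.
  assert (Ee : - ((p + 1) / (p - 1)) = - (2 / (p - 1)) - 1) by (field; lra).
  set (R1 := Rpower r (- ((p + 1) / (p - 1)))).
  assert (HR1 : 0 < R1) by apply Rpower_pos.
  set (Q1 := 2 ^ n * C0). set (Q2 := 2 * C0 * Rpower 2 (2 / (p - 1))).
  set (Q3 := Rpower (Rabs M) (- (1 / q)) * Rpower (C0 * Rpower 2 (2 / (p - 1))) ((p + 1) / 2)).
  assert (HQ1 : 0 < Q1) by (unfold Q1; apply Rmult_lt_0_compat; auto; apply pow_lt; lra).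
  assert (HQ2 : 0 < Q2) by (unfold Q2; apply Rmult_lt_0_compat; [lra| apply Rpower_pos]).
  assert (HQ3 : 0 < Q3) by (unfold Q3; apply Rmult_lt_0_compat; apply Rpower_pos).
  assert (Dc = Q1 + Q2 + Q3) by reflexivity.
  assert (Hdiv : forall K, K * Rpower r (- (2 / (p - 1))) / r = K * R1).
  { intros K. unfold R1. rewrite Ee, <- Rpower_div_r by auto. unfold Rdiv; ring. }
  enough (- u1 r <= Q1 * R1 \/ - u1 r <= Q2 * R1 \/ - u1 r <= Q3 * R1) by
    (rewrite H0; destruct H1 as [h|[h|h]]; nra).
  destruct (Rle_or_lt 0 M) as [HM|HM].
  - left. pose proof (dbound_pos r Hr HM). pose proof (decay r Hr).
    rewrite <- Hdiv. unfold Q1.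
    apply Rmult_le_reg_r with r; auto. field_simplify; try lra.
    replace (2 ^ n * C0 * Rpower r (- (2 / (p - 1)))) with (2 ^ n * (C0 * Rpower r (- (2 / (p - 1))))) by ring.
    eapply Rle_trans; [exact H1|]. apply Rmult_le_compat_l; auto. apply pow_le; lra.
  - right. destruct (dbound_neg r Hr HM) as [h|h].
    + right. pose proof (Hpos (r / 2) ltac:(lra)) as Hu.
      destruct (Req_dec (u (r / 2)) 0) as [e|ne].
      { rewrite e, Rmult_0_r in h. unfold Rdiv in h. rewrite Rmult_0_l, rpow_abs_0 in h. nra. }
      assert (Hu' : 0 < u (r / 2)) by lra.
      rewrite Fu_eq in h by auto.
      assert (HMa : 0 < Rabs M) by (rewrite Rabs_left; lra).
      rewrite rpow_abs_pos in h by (apply Rdiv_lt_0_compat; auto; apply Rpower_pos).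
      eapply Rle_trans; [exact h|].
      set (B := C0 * Rpower 2 (2 / (p - 1)) * Rpower r (- (2 / (p - 1)))).
      assert (HB : u (r / 2) <= B) by (apply u_half; auto).
      assert (HT : Rpower (u (r / 2)) p / Rabs M <= Rpower B p / Rabs M).
      { apply Rmult_le_compat_r. left; apply Rinv_0_lt_compat; auto.
        apply rp_le; [split|]; lra. }
      eapply Rle_trans. apply rp_le; [split; [apply Rdiv_lt_0_compat; auto; apply Rpower_pos| exact HT]| left; apply Rdiv_lt_0_compat; lra].
      unfold Rdiv at 1. rewrite <- Rpower_mult_distr by (try apply Rpower_pos; apply Rinv_0_lt_compat; auto).
      rewrite Rpower_inv_base by auto. rewrite Rpower_mult.
      replace (p * (1 / q)) with ((p + 1) / 2) by (unfold q; field; lra).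
      unfold B. rewrite <- Rpower_mult_distr by (try apply Rpower_pos; apply Rmult_lt_0_compat; auto; apply Rpower_pos).
      unfold Q3, R1. rewrite Rpower_mult.
      replace (- (2 / (p - 1)) * ((p + 1) / 2)) with (- ((p + 1) / (p - 1))) by (field; lra).
      right; ring.
    + left. rewrite <- Hdiv. unfold Q2.
      apply Rmult_le_reg_r with r; auto. field_simplify; try lra.
      pose proof (u_half r Hr). lra.
Qed.


Definition cc := C0 + Dc.

Lemma Dc_pos : 0 < Dc.
Proof.
  pose proof C0_pos. unfold Dc.
  assert (0 < 2 ^ n * C0) by (apply Rmult_lt_0_compat; auto; apply pow_lt; lra).
  assert (0 < 2 * C0 * Rpower 2 (2 / (p - 1))) by (apply Rmult_lt_0_compat; [lra| apply Rpower_pos]).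
  assert (0 < Rpower (Rabs M) (- (1 / q)) * Rpower (C0 * Rpower 2 (2 / (p - 1))) ((p + 1) / 2))
    by (apply Rmult_lt_0_compat; apply Rpower_pos).
  lra.
Qed.

Lemma cc_pos : 0 < cc.
Proof. unfold cc. pose proof C0_pos. pose proof Dc_pos. lra. Qed.

Lemma main_bound r : 0 < r ->
  u r <= Rmin 1 (cc * Rpower r (- (2 / (p - 1)))) /\
  Rabs (Derive u r) <= cc * Rpower r (- ((p + 1) / (p - 1))).
Proof.
  intros Hr. pose proof C0_pos. pose proof Dc_pos.
  pose proof (Rpower_pos r (- (2 / (p - 1)))). pose proof (Rpower_pos r (- ((p + 1) / (p - 1)))).
  split.
  - apply Rmin_glb. apply u_le1; lra.
    eapply Rle_trans. apply decay; auto. unfold cc. nra.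
  - rewrite (is_derive_unique u r (u1 r) (Hd1 r Hr)).
    pose proof (u1_nonpos r ltac:(lra)). rewrite Rabs_left1 by auto.
    eapply Rle_trans. apply final_d; auto. unfold cc. nra.
Qed.

End Main.



Theorem proposition2p4 (N : nat) (p M : R) :
  1 < p -> (1 <= N)%nat ->
  exists c : R, 0 < c /\
    forall u : R -> R,
      ground_state N p M u -> u 0 = 1 ->
      forall r : R, 0 < r ->
        u r <= Rmin 1 (c * Rpower r (- (2 / (p - 1)))) /\
        Rabs (Derive u r) <= c * Rpower r (- ((p + 1) / (p - 1))).
Proof.
  intros Hp HN. destruct N as [|n]; [lia|].
  exists (cc n p M). split; [apply cc_pos|].
  intros u [u1 [u2 [[Hd1 [Hd2 [Hq1 [Hq2 _]]]] [Hpos [H10 HE]]]]] Hone r Hr.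
  exact (main_bound n p M u u1 u2 Hp Hd1 Hd2 Hq1 Hq2 Hpos H10 HE Hone r Hr).
Qed.
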